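(* Let $k\ge1$, $G=(V,E)$ an inductively $k$-independent graph with $k$-independence ordering $v_1,\dots,v_n$, $f:2^V\to\mathbb{R}_{\ge0}$ monotone submodular with $f(\emptyset)=0$, and $\beta>0$. Let $S_{\mathrm{end}}$ and $w_1,\dots,w_n$ be produced by Phase 1 of algorithm PD-MON (described in the context). Then \[ f(S_{\mathrm{end}})\le\frac{1+\beta}{\beta}\sum_{i=1}^n w_i. \]
   Context: $N(v)$ is the neighbourhood of $v$ (excluding $v$); $G$ is inductively $k$-independent with $k$-independence ordering $v_1,\dots,v_n$ if for every $i$, $G[N(v_i)\cap\{v_i,\dots,v_n\}]$ has no independent set of size more than $k$. For $S\subseteq V$, $f_S(v)=f(S\cup\{v\})-f(S)$. Phase 1 of algorithm PD-MON (parameter $\beta>0$): start with $S=\emptyset$ and $w_1=\dots=w_n=0$. For $i=1,\dots,n$: let $C_i=N(v_i)\cap S$ for the current $S$; if $f_S(v_i)>(1+\beta)\sum_{v_j\in C_i}w_j$, set $w_i=f_S(v_i)-\sum_{v_j\in C_i}w_j$ (with $S$ the set before insertion) and add $v_i$ to $S$; otherwise leave $w_i=0$. $S_{\mathrm{end}}$ is $S$ at the end of this phase. *)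

(* Defs.v *)
From HB Require Import structures.
From mathcomp Require Import all_boot all_order all_algebra.
Set Implicit Arguments. Unset Strict Implicit. Unset Printing Implicit Defensive.
Import Order.TTheory GRing.Theory Num.Theory.
Local Open Scope ring_scope.

(* Vertices are 'I_n; the k-independence ordering v_1,...,v_n is the natural
   order 0 < 1 < ... < n-1 of 'I_n.  A simple graph is a symmetric,
   irreflexive relation e (e u v = "uv is an edge"). *)

Definition simple_graph (n : nat) (e : rel 'I_n) : Prop :=
  symmetric e /\ irreflexive e.

Definition independent (n : nat) (e : rel 'I_n) (I : {set 'I_n}) : Prop :=
  forall u v, u \in I -> v \in I -> ~~ e u v.

Definition later_nbhd (n : nat) (e : rel 'I_n) (i : 'I_n) : {set 'I_n} :=
  [set j | e i j & (i <= j)%N].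

Definition inductively_k_independent (n k : nat) (e : rel 'I_n) : Prop :=
  forall (i : 'I_n) (I : {set 'I_n}),
    I \subset later_nbhd e i -> independent e I -> (#|I| <= k)%N.

Definition monotone_set_fun (R : realFieldType) (n : nat)
  (f : {set 'I_n} -> R) : Prop :=
  forall A B : {set 'I_n}, A \subset B -> f A <= f B.

Definition submodular (R : realFieldType) (n : nat)
  (f : {set 'I_n} -> R) : Prop :=
  forall A B : {set 'I_n}, f (A :|: B) + f (A :&: B) <= f A + f B.

Definition marginal (R : realFieldType) (n : nat)
  (f : {set 'I_n} -> R) (S : {set 'I_n}) (v : 'I_n) : R :=
  f (v |: S) - f S.

Definition pdmon_step (R : realFieldType) (n : nat) (e : rel 'I_n)
  (f : {set 'I_n} -> R) (beta : R)
  (st : {set 'I_n} * {ffun 'I_n -> R}) (i : 'I_n)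
  : {set 'I_n} * {ffun 'I_n -> R} :=
  let S := st.1 in
  let w := st.2 in
  let C := [set j in S | e i j] in
  let sw := \sum_(j in C) w j in
  let m := marginal f S i in
  if (1 + beta) * sw < m
  then (i |: S, [ffun j => if j == i then m - sw else w j])
  else (S, w).

Definition pdmon_phase1 (R : realFieldType) (n : nat) (e : rel 'I_n)
  (f : {set 'I_n} -> R) (beta : R) : {set 'I_n} * {ffun 'I_n -> R} :=
  foldl (pdmon_step e f beta) (set0, [ffun => 0]) (enum 'I_n).

(* Main.v *)
Require Import Defs.
From HB Require Import structures.
From mathcomp Require Import all_boot all_order all_algebra.
From mathcomp Require Import ring lra.
Import Order.TTheory GRing.Theory Num.Theory.
Local Open Scope ring_scope.

Lemma fold_inv (R : realFieldType) (n : nat) (e : rel 'I_n)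
  (f : {set 'I_n} -> R) (beta : R) (s : seq 'I_n) (st : {set 'I_n} * {ffun 'I_n -> R}) :
  0 < beta -> uniq s ->
  f st.1 <= (1 + beta) / beta * \sum_(i < n) st.2 i ->
  (forall j, j \in s -> st.2 j = 0) ->
  let st' := foldl (pdmon_step e f beta) st s in
  f st'.1 <= (1 + beta) / beta * \sum_(i < n) st'.2 i.
Proof.
move=> hb; elim: s st => [|i s IH] st //= /andP[his us] hP hz.
apply: IH => //; last first.
  move=> j hj; rewrite /pdmon_step /=.
  case: ifP => _ //=; last by apply: hz; rewrite inE hj orbT.
  rewrite ffunE; case: eqP => [ji|_]; first by rewrite -ji hj in his.
  by apply: hz; rewrite inE hj orbT.
rewrite /pdmon_step; case: ifP => // hlt /=.
set sw := \sum_(j in _) _ in hlt *.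
set m := marginal f st.1 i in hlt *.
rewrite (bigD1 i) //= ffunE eqxx.
rewrite (eq_bigr (fun j => st.2 j)); last first.
  by move=> j /negPf ji; rewrite ffunE ji.
move: hP; rewrite (bigD1 i) //= hz ?inE ?eqxx // add0r => hP.
have hf : f (i |: st.1) = f st.1 + m by rewrite /m /marginal; ring.
rewrite hf mulrDr addrC.
have hc : 0 <= (1 + beta) / beta * (m - sw) - m.
  have -> : (1 + beta) / beta * (m - sw) - m = (m - (1 + beta) * sw) / beta.
    by field; rewrite gt_eqF.
  by apply: divr_ge0; [rewrite subr_ge0 ltW | exact: ltW].
lra.
Qed.

Theorem lemma4 (R : realFieldType) (n k : nat) (e : rel 'I_n)
  (f : {set 'I_n} -> R) (beta : R) :
  (1 <= k)%N ->
  simple_graph e ->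
  inductively_k_independent k e ->
  (forall A, 0 <= f A) ->
  monotone_set_fun f ->
  submodular f ->
  f set0 = 0 ->
  0 < beta ->
  let: (S_end, w) := pdmon_phase1 e f beta in
  f S_end <= (1 + beta) / beta * \sum_(i < n) w i.
Proof.
move=> _ _ _ _ _ _ f0 hb.
have := @fold_inv R n e f beta (enum 'I_n) (set0, [ffun => 0]) hb (enum_uniq _).
rewrite /pdmon_phase1; case: foldl => S w /=; apply.
  rewrite f0 big1 ?mulr0 // => i _; by rewrite ffunE.
by move=> j _; rewrite ffunE.
Qed.
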